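(* Let $J\ge 2$ be an integer (the number of reflecting surfaces, indexed $1,\dots,J$), and let $N_p, N_a$ be positive integers and $P_t, P_a, M, \kappa_B, \kappa_U, \kappa_I, \sigma^2$ be positive reals with $N_p\kappa_I<1$, i.e. $N_p<\kappa_I^{-1}$. Set $C_a = P_a N_a \kappa_U^2$ and $C_t = P_t M \kappa_B^2$, and for $l\in\{1,\dots,J\}$ define $$\gamma(l)=\frac{C_aC_tN_a(N_p\kappa_I)^{2(J-1)}}{\sigma^2C_a(N_p\kappa_I)^{2(J-l)}+\sigma^2\big(C_t(N_p\kappa_I)^{2(l-1)}+\sigma^2\big)}.$$ Let $\tilde l=\frac{J+1}{2}+\frac{\log(C_a/C_t)}{2\log(N_p^2\kappa_I^2)}$. Then an optimal solution $l_1^\star$ of $\max_{l\in\{1,\dots,J\}}\gamma(l)$ is given as follows. (I) If $C_a<C_t$: $l_1^\star=\arg\max_{l\in\{\lfloor\tilde l\rfloor,\lceil\tilde l\rceil\}}\gamma(l)$ if $N_p<(C_a/C_t)^{\frac{1}{2(J-1)}}\kappa_I^{-1}$, and $l_1^\star=J$ if $(C_a/C_t)^{\frac{1}{2(J-1)}}\kappa_I^{-1}\le N_p<\kappa_I^{-1}$. (II) If $C_a=C_t$: $l_1^\star=\arg\max_{l\in\{\lfloor\frac{J+1}{2}\rfloor,\lceil\frac{J+1}{2}\rceil\}}\gamma(l)$. (III) If $C_a>C_t$: $l_1^\star=\arg\max_{l\in\{\lfloor\tilde l\rfloor,\lceil\tilde l\rceil\}}\gamma(l)$ if $N_p<(C_t/C_a)^{\frac{1}{2(J-1)}}\kappa_I^{-1}$,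 and $l_1^\star=1$ if $(C_t/C_a)^{\frac{1}{2(J-1)}}\kappa_I^{-1}\le N_p<\kappa_I^{-1}$.
   Context: Physical setting (for interpretation): an $M$-antenna base station with transmit power $P_t$ sends information to a single-antenna user over a cascaded line-of-sight path through $J$ intelligent reflecting surfaces (IRSs) numbered $1,\dots,J$ in order from the base station; IRS $l$ is active (with $N_a$ elements, per-element amplification power limit $P_a$) and the others are passive (with $N_p$ elements each). $\kappa_B,\kappa_I,\kappa_U$ are the amplitude path gains of the base station–IRS 1 link, each inter-IRS link, and the IRS $J$–user link; $\sigma^2$ is the noise power (both amplification noise per active element and receiver noise). With optimal beamforming, the user's received SNR as a function of the active IRS index $l$ is $\gamma(l)$ above. Standing assumption: $N_p\kappa_I<1$ (the cascaded passive gain decreases with each reflection). $\lfloor\cdot\rfloor,\lceil\cdot\rceil$ are floor and ceiling. *)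

(* Defs.v *)
From mathcomp Require Import all_boot all_order all_algebra.
From mathcomp Require Import all_classical all_reals all_analysis.
Set Implicit Arguments. Unset Strict Implicit. Unset Printing Implicit Defensive.
Import Order.TTheory GRing.Theory Num.Theory.
Local Open Scope ring_scope.

(* SNR gamma(l) with l an integer index, x := Np * kI, exponents are integer powers *)
Definition gammaSNR {R : realType} (J : nat) (Ca Ct Na x s2 : R) (l : int) : R :=
  (Ca * Ct * Na * x ^ (2 * (J%:Z - 1)))
  / (s2 * Ca * x ^ (2 * (J%:Z - l)) + s2 * (Ct * x ^ (2 * (l - 1)) + s2)).

Definition is_opt {R : realType} (g : int -> R) (J : nat) (l : int) : Prop :=
  (1 <= l <= J%:Z) /\ (forall l' : int, 1 <= l' <= J%:Z -> g l' <= g l).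

Definition argmax2 {R : realType} (g : int -> R) (a b : int) : int :=
  if g b <= g a then a else b.

(* Main.v *)
Require Import Defs.
From mathcomp Require Import all_boot all_order all_algebra.
From mathcomp Require Import all_classical all_reals all_analysis.
From mathcomp Require Import lra zify ring.
Import Order.TTheory GRing.Theory Num.Theory.
Local Open Scope ring_scope.

Definition hh {R : realType} (J : nat) (Ca Ct L : R) (k : int) : R :=
  Ca * expR ((J%:Z - k)%:~R * L) + Ct * expR ((k - 1)%:~R * L).

Lemma step (R : realType) (J : nat) (Ca Ct L t : R) (k : int) :
  0 < Ca -> 0 < Ct -> L < 0 -> ln (Ca / Ct) = (2 * t - J%:R - 1) * L ->
  (k%:~R + 1/2 <= t -> hh J Ca Ct L (k + 1) <= hh J Ca Ct L k) /\
  (t <= k%:~R + 1/2 -> hh J Ca Ct L k <= hh J Ca Ct L (k + 1)).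
Proof.
move=> Ca0 Ct0 L0 Hln.
have Hl : ln Ca = ln Ct + (2 * t - J%:R - 1) * L.
  by rewrite -Hln lnM ?posrE ?invr_gt0 // lnV ?posrE //; lra.
rewrite /hh (_ : k + 1 - 1 = k); last by rewrite addrK.
rewrite !intrB !intrD /=.
set u := k%:~R.
have E1 : expR ((J%:R - u) * L) = expR ((J%:R - (u + 1)) * L) * expR L.
  by rewrite -expRD; congr expR; lra.
have E2 : expR (u * L) = expR ((u - 1) * L) * expR L.
  by rewrite -expRD; congr expR; lra.
rewrite E1 E2.
have EA : Ca * expR ((J%:R - (u + 1)) * L) = expR (ln Ct + (2 * t - J%:R - 1) * L + (J%:R - (u + 1)) * L).
  by rewrite expRD -Hl lnK ?posrE.
have EB : Ct * expR ((u - 1) * L) = expR (ln Ct + (u - 1) * L).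
  by rewrite expRD lnK ?posrE.
move: EA EB.
set a := expR ((J%:R - (u + 1)) * L).
set b := expR ((u - 1) * L).
set y := expR L.
move=> EA EB.
have y1 : y < 1 by rewrite /y expR_lt1.
have y0 : 0 < y by apply: expR_gt0.
split=> H.
- have AB : Ca * a <= Ct * b.
    have h : 0 <= (t - u - 1/2) * (- L) by apply: mulr_ge0; lra.
    rewrite EA EB ler_expR. nra.
  have h2 : 0 <= (Ct * b - Ca * a) * (1 - y) by apply: mulr_ge0; lra.
  nra.
- have AB : Ct * b <= Ca * a.
    have h : 0 <= (u + 1/2 - t) * (- L) by apply: mulr_ge0; lra.
    rewrite EA EB ler_expR. nra.
  have h2 : 0 <= (Ca * a - Ct * b) * (1 - y) by apply: mulr_ge0; lra.
  nra.
Qed.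
Lemma ex_nat (l m : int) : l <= m -> exists n : nat, l = m - n%:Z.
Proof. move=> H; exists (absz (m - l)); rewrite gez0_abs ?subr_ge0 //; lra. Qed.

Lemma chain (R: realType) (h : int -> R) (t : R) :
 (forall k, k%:~R + 1/2 <= t -> h (k+1) <= h k) ->
 (forall k, t <= k%:~R + 1/2 -> h k <= h (k+1)) ->
 forall m l : int,
 (m%:~R - 1/2 <= t -> l <= m -> h m <= h l) /\ (t <= m%:~R + 1/2 -> m <= l -> h m <= h l).
Proof.
move=> Hd Hi m l; split=> Ht Hl.
- have [n ->] := ex_nat _ _ Hl.
  elim: n => [|n IH]; first by rewrite subr0.
  apply: (le_trans IH).
  have := Hd (m - n.+1%:Z).
  rewrite (_ : m - n.+1%:Z + 1 = m - n%:Z); last by lia.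
  apply. rewrite intrB.
  have : (1:R) <= (n.+1%:Z)%:~R by rewrite ler1z.
  lra.
- have [n ->] : exists n : nat, l = m + n%:Z.
    have [n En] := ex_nat _ _ (lexx l).
    exists (absz (l - m)); rewrite gez0_abs ?subr_ge0 //; lra.
  elim: n => [|n IH]; first by rewrite addr0.
  apply: (le_trans IH).
  rewrite (_ : m + n.+1%:Z = m + n%:Z + 1); last by lia.
  apply: Hi. rewrite intrD.
  have : (0:R) <= (n%:Z)%:~R by rewrite ler0z.
  lra.
Qed.

Lemma opt_generic (R : realType) (J : nat) (Ca Ct L t K s2 : R) (g : int -> R) :
  (1 <= J)%N -> 0 < Ca -> 0 < Ct -> L < 0 -> ln (Ca / Ct) = (2 * t - J%:R - 1) * L ->
  0 < K -> 0 < s2 ->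
  (forall l, g l = K / (s2 * hh J Ca Ct L l + s2 * s2)) ->
  (1 <= t <= J%:R -> is_opt g J (argmax2 g (Num.floor t) (Num.ceil t))) /\
  (J%:R - 1/2 <= t -> is_opt g J J%:Z) /\
  (t <= 3/2 -> is_opt g J 1).
Proof.
move=> J1 Ca0 Ct0 L0 Hln K0 s0 Hg.
have hpos : forall l, 0 < hh J Ca Ct L l.
  by move=> l; rewrite /hh; apply: addr_gt0; apply: mulr_gt0 => //; apply: expR_gt0.
have mono : forall l m, hh J Ca Ct L m <= hh J Ca Ct L l -> g l <= g m.
  move=> l m H; rewrite !Hg ler_pM2l //.
  rewrite lef_pV2 ?posrE; last 2 first.
  - by apply: addr_gt0; [apply: mulr_gt0|apply: mulr_gt0].
  - by apply: addr_gt0; [apply: mulr_gt0|apply: mulr_gt0].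
  by rewrite lerD2r ler_pM2l.
have Hd : forall k : int, k%:~R + 1/2 <= t -> hh J Ca Ct L (k + 1) <= hh J Ca Ct L k.
  by move=> k; case: (@step R J Ca Ct L t k Ca0 Ct0 L0 Hln).
have Hi : forall k : int, t <= k%:~R + 1/2 -> hh J Ca Ct L k <= hh J Ca Ct L (k + 1).
  by move=> k; case: (@step R J Ca Ct L t k Ca0 Ct0 L0 Hln).
have Hc := @chain R _ t Hd Hi.
have J1' : (1 <= J%:Z) by lia.
split; [|split].
- case/andP=> t1 tJ.
  set F := Num.floor t; set C := Num.ceil t.
  have Ft : F%:~R <= t by apply: floor_le.
  have tC : t <= C%:~R by apply: ceil_ge.
  have F1 : 1 <= F by rewrite floor_ge_int.
  have CJ : C <= J%:Z by rewrite ceil_le_int.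
  have FC : F <= C by rewrite -(ler_int R); apply: le_trans tC.
  have Fdom : 1 <= F <= J%:Z by rewrite F1 /=; exact: le_trans FC CJ.
  have Cdom : 1 <= C <= J%:Z by rewrite CJ andbT; exact: le_trans F1 FC.
  have key : forall l, g l <= g F \/ g l <= g C.
    move=> l; case: (lerP l F) => Hl.
    - left; apply: mono; case: (Hc F l) => H1 _; apply: H1 => //; lra.
    - right; apply: mono; case: (Hc C l) => _ H2; apply: H2; first lra.
      have H3 : t < (F + 1)%:~R by case/andP: (floor_itv t).
      have H4 : ((F + 1)%:~R : R) <= l%:~R by rewrite ler_int; lia.
      rewrite ceil_le_int; apply: ltW; exact: lt_le_trans H3 H4.
  split; first by rewrite /argmax2; case: ifP.
  move=> l _; rewrite /argmax2; case: ifP => H.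
  + case: (key l) => H'; lra.
  + move/negbT: H; rewrite -ltNge => H.
    case: (key l) => H'; lra.
- move=> HJ; split; first by rewrite lexx J1'.
  move=> l /andP [l1 lJ]; apply: mono.
  case: (Hc J%:Z l) => H1 _; apply: H1 => //.
- move=> H1; split; first by rewrite lexx J1'.
  move=> l /andP [l1 lJ]; apply: mono.
  case: (Hc 1 l) => _ H2; apply: H2 => //. lra.
Qed.
Lemma Ex (R : realType) (x : R) (z : int) : 0 < x ->
  x ^ (2 * z) = expR (z%:~R * ln (x ^+ 2)).
Proof.
move=> x0.
rewrite -powR_intmul ?ltW // -[LHS]lnK ?posrE ?powR_gt0 // ln_powR lnXn //.
congr expR. rewrite intrM. ring.
Qed.

Lemma pow_cmp (R: realType) (c x d : R) : 0 < c -> 0 < x -> 0 < d ->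
  (x < c `^ (1/d) -> d * ln x < ln c) /\ (c `^ (1/d) <= x -> ln c <= d * ln x).
Proof.
move=> c0 x0 d0.
have P0 : 0 < c `^ (1/d) by apply: powR_gt0.
have E : ln c = d * ln (c `^ (1/d)) by rewrite ln_powR; field; rewrite gt_eqF.
split=> H; rewrite E.
- by rewrite ltr_pM2l // ltr_ln ?posrE.
- by rewrite ler_pM2l // ler_ln ?posrE.
Qed.
Theorem proposition1 (R : realType) (J Np Na : nat) (Pt Pa M kB kU kI s2 : R) :
  (2 <= J)%N -> (0 < Np)%N -> (0 < Na)%N ->
  0 < Pt -> 0 < Pa -> 0 < M -> 0 < kB -> 0 < kU -> 0 < kI -> 0 < s2 ->
  Np%:R * kI < 1 ->
  let Ca := Pa * Na%:R * kU ^+ 2 in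
  let Ct := Pt * M * kB ^+ 2 in
  let g := gammaSNR J Ca Ct Na%:R (Np%:R * kI) s2 in
  let lt := (J%:R + 1) / 2 + ln (Ca / Ct) / (2 * ln (Np%:R ^+ 2 * kI ^+ 2)) in
  (Ca < Ct ->
     (Np%:R < powR (Ca / Ct) (1 / (2 * (J%:R - 1))) * kI^-1 ->
        is_opt g J (argmax2 g (Num.floor lt) (Num.ceil lt))) /\
     (powR (Ca / Ct) (1 / (2 * (J%:R - 1))) * kI^-1 <= Np%:R -> Np%:R < kI^-1 ->
        is_opt g J J%:Z)) /\
  (Ca = Ct ->
     is_opt g J (argmax2 g (Num.floor ((J%:R + 1) / 2 : R))
                           (Num.ceil ((J%:R + 1) / 2 : R)))) /\
  (Ct < Ca ->
     (Np%:R < powR (Ct / Ca) (1 / (2 * (J%:R - 1))) * kI^-1 ->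
        is_opt g J (argmax2 g (Num.floor lt) (Num.ceil lt))) /\
     (powR (Ct / Ca) (1 / (2 * (J%:R - 1))) * kI^-1 <= Np%:R -> Np%:R < kI^-1 ->
        is_opt g J 1)).
Proof.
move=> J2 Np0 Na0 Pt0 Pa0 M0 kB0 kU0 kI0 s0 HxI Ca Ct g lt.
have Ca0 : 0 < Ca by rewrite /Ca; apply: mulr_gt0; [apply: mulr_gt0 => //; rewrite ltr0n|apply: exprn_gt0].
have Ct0 : 0 < Ct by rewrite /Ct; apply: mulr_gt0; [apply: mulr_gt0 => //|apply: exprn_gt0].
set x := Np%:R * kI.
have x0 : 0 < x by rewrite /x; apply: mulr_gt0 => //; rewrite ltr0n.
set L := ln (Np%:R ^+ 2 * kI ^+ 2).
have EL : L = ln (x ^+ 2) by rewrite /L /x exprMn.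
have EL2 : L = 2 * ln x by rewrite EL lnXn // mulr2n; lra.
have L0 : L < 0 by rewrite EL; apply: ln_lt0; rewrite exprn_gt0 //= expr_lt1 ?ltW.
set K := Ca * Ct * Na%:R * x ^ (2 * (J%:Z - 1)).
have K0 : 0 < K.
  rewrite /K; apply: mulr_gt0; last by apply: exprz_gt0.
  by apply: mulr_gt0; [apply: mulr_gt0|rewrite ltr0n].
have Hg : forall l, g l = K / (s2 * hh J Ca Ct L l + s2 * s2).
  move=> l; rewrite /g /gammaSNR /hh EL -!Ex //.
  congr (_ / _); ring.
have J1 : (1 <= J)%N by apply: leq_trans J2.
have HJ : (2:R) <= J%:R by rewrite (ler_nat R 2 J).
set a := ln (Ca / Ct).
have Hlt : a = (2 * lt - J%:R - 1) * L.
  rewrite /lt -/L -/a. field. by rewrite lt_eqF.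
have G := @opt_generic R J Ca Ct L lt K s2 g J1 Ca0 Ct0 L0 Hlt K0 s0 Hg.
have d0 : 0 < 2 * (J%:R - 1) :> R by lra.

split; [|split].
- move=> CaCt.
  have a0 : a < 0 by apply: ln_lt0; rewrite divr_gt0 //= ltr_pdivrMr // mul1r.
  have t1 : (J%:R + 1) / 2 < lt.
    have : 0 < (2 * lt - J%:R - 1) * (- L) by rewrite mulrN -Hlt; lra.
    rewrite pmulr_lgt0; [lra | lra].
  have [P1 P2] := @pow_cmp R (Ca / Ct) x _ (divr_gt0 Ca0 Ct0) x0 d0.
  split.
  + move=> H; apply: G.1.
    have H' : x < (Ca / Ct) `^ (1 / (2 * (J%:R - 1))) by rewrite /x -ltr_pdivlMr.
    have := P1 H'. rewrite -/a Hlt => H2.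
    have : 0 < ((J%:R - 1) - (2 * lt - J%:R - 1)) * (- L) by move: H2; rewrite EL2; lra.
    rewrite pmulr_lgt0; [ | lra]. move=> H3. apply/andP; split; lra.
  + move=> H _; apply: G.2.1.
    have H' : (Ca / Ct) `^ (1 / (2 * (J%:R - 1))) <= x by rewrite /x -ler_pdivrMr.
    have := P2 H'. rewrite -/a Hlt => H2.
    have : 0 <= ((2 * lt - J%:R - 1) - (J%:R - 1)) * (- L) by move: H2; rewrite EL2; lra.
    rewrite pmulr_lge0; [ lra | lra].
- move=> CaCt.
  have Hln2 : ln (Ca / Ct) = (2 * ((J%:R + 1) / 2) - J%:R - 1) * L.
    by rewrite CaCt divff ?gt_eqF // ln1; field.
  have G2 := @opt_generic R J Ca Ct L ((J%:R + 1) / 2) K s2 g J1 Ca0 Ct0 L0 Hln2 K0 s0 Hg.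
  apply: G2.1; apply/andP; split; lra.
- move=> CtCa.
  have a0 : 0 < a by apply: ln_gt0; rewrite ltr_pdivlMr // mul1r.
  have t1 : lt < (J%:R + 1) / 2.
    have : 0 < (2 * lt - J%:R - 1) * L by rewrite -Hlt.
    rewrite -[_ * L]opprK -mulrN oppr_gt0 => H.
    have : 0 < - (2 * lt - J%:R - 1) * (- L) by rewrite mulNr oppr_gt0.
    rewrite pmulr_lgt0; [lra | lra].
  have [P1 P2] := @pow_cmp R (Ct / Ca) x _ (divr_gt0 Ct0 Ca0) x0 d0.
  have Ea : ln (Ct / Ca) = - a by rewrite /a -invf_div lnV // posrE divr_gt0.
  split.
  + move=> H; apply: G.1.
    have H' : x < (Ct / Ca) `^ (1 / (2 * (J%:R - 1))) by rewrite /x -ltr_pdivlMr.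
    have := P1 H'. rewrite Ea Hlt => H2.
    have : 0 < (2 * lt - 2) * (- L) by move: H2; rewrite EL2; lra.
    rewrite pmulr_lgt0; [ | lra]. move=> H3. apply/andP; split; lra.
  + move=> H _; apply: G.2.2.
    have H' : (Ct / Ca) `^ (1 / (2 * (J%:R - 1))) <= x by rewrite /x -ler_pdivrMr.
    have := P2 H'. rewrite Ea Hlt => H2.
    have : 0 <= (2 - 2 * lt) * (- L) by move: H2; rewrite EL2; lra.
    rewrite pmulr_lge0; [ lra | lra].
Qed.
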